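(* Let $0,1,\dots,9$ be points of $\mathbb{P}^3(\mathbb{C})$ with fixed representative vectors. Assume that (i) the vector space of quadratic forms vanishing at the six points $0,\dots,5$ has dimension $4$, and (ii) $[0125][0234][1345]-[0124][2345][0135]\neq 0$. Let $M$ be the $4\times 4$ matrix whose row indexed by $j\in\{6,7,8,9\}$ is $$\big([015j][234j],\ [012j][345j],\ [024j][135j],\ [045j][123j]\big).$$ Then the ten points lie on a common quadric surface (the zero set of a nonzero quadratic form) if and only if $\det M=0$.
   Context: $[abcd]$ denotes the determinant of the $4\times4$ matrix whose columns are the chosen representative vectors of the points $a,b,c,d$. A quadric surface is the zero locus in $\mathbb{P}^3$ of a nonzero homogeneous polynomial of degree $2$ in four variables. *)

(* Defs.v *)
From HB Require Import structures.
From mathcomp Require Import all_boot all_order all_algebra.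
From mathcomp Require Import complex.
From mathcomp Require Import reals.
Set Implicit Arguments. Unset Strict Implicit. Unset Printing Implicit Defensive.
Import Order.TTheory GRing.Theory Num.Theory.
Local Open Scope ring_scope.

Section Defs.
Variable F : fieldType.

(* Monomials of degree 2 in 4 variables x_0..x_3: pairs (i,j) with i <= j. *)
Definition mon2 := {ij : 'I_4 * 'I_4 | (ij.1 <= ij.2)%N}.
Definition nmon2 := #|{: mon2}|.

Definition monval (k : 'I_nmon2) (x : 'cV[F]_4) : F :=
  let ij := val (enum_val k : mon2) in x ij.1 0 * x ij.2 0.

(* A quadratic form = its coefficient vector in the monomial basis. *)
Definition quadform (c : 'rV[F]_nmon2) (x : 'cV[F]_4) : F :=
  \sum_(k < nmon2) c 0 k * monval k x.

(* Evaluation matrix of the points p 0, ..., p (m-1): u *m evalmx = 0 iff the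
   quadratic form u vanishes at each of those points. *)
Definition evalmx (m : nat) (p : 'I_10 -> 'cV[F]_4) : 'M[F]_(nmon2, m) :=
  \matrix_(k, i) monval k (p (inord i)).

Definition pt (p : 'I_10 -> 'cV[F]_4) (a : nat) : 'cV[F]_4 := p (inord a).

Definition br (p : 'I_10 -> 'cV[F]_4) (a b c d : nat) : F :=
  \det (\matrix_(i < 4, j < 4) ([:: pt p a; pt p b; pt p c; pt p d]`_j) i 0).

Definition Mmx (p : 'I_10 -> 'cV[F]_4) : 'M[F]_4 :=
  \matrix_(r < 4, s < 4)
    (let j := (r + 6)%N in
     [:: br p 0 1 5 j * br p 2 3 4 j; br p 0 1 2 j * br p 3 4 5 j;
         br p 0 2 4 j * br p 1 3 5 j; br p 0 4 5 j * br p 1 2 3 j]`_s).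
End Defs.

(* Main.v *)
Require Import Defs.
From HB Require Import structures.
From mathcomp Require Import all_boot all_order all_algebra.
From mathcomp Require Import complex.
From mathcomp Require Import reals.
From mathcomp Require Import ring zify.
Set Implicit Arguments. Unset Strict Implicit. Unset Printing Implicit Defensive.
Import Order.TTheory GRing.Theory Num.Theory.
Local Open Scope ring_scope.

Section S.
Variable F : fieldType.

Definition brv (u v w x : 'cV[F]_4) : F :=
  \det (\matrix_(i < 4, j < 4) ([:: u; v; w; x]`_j) i 0).
Definition co (u : 'cV[F]_4) (k : nat) : F := u (inord k) 0.

Lemma brvE u v w x : brv u v w x = co u 0*co v 1*co w 2*co x 3 - co u 0*co v 1*co x 2*co w 3 - co u 0*co w 1*co v 2*co x 3 + co u 0*co w 1*co x 2*co v 3 + co u 0*co x 1*co v 2*co w 3 - co u 0*co x 1*co w 2*co v 3 - co v 0*co u 1*co w 2*co x 3 + co v 0*co u 1*co x 2*co w 3 + co v 0*co w 1*co u 2*co x 3 - co v 0*co w 1*co x 2*co u 3 - co v 0*co x 1*co u 2*co w 3 + co v 0*co x 1*co w 2*co u 3 + co w 0*co u 1*co v 2*co x 3 - co w 0*co u 1*co x 2*co v 3 - co w 0*co v 1*co u 2*co x 3 + co w 0*co v 1*co x 2*co u 3 + co w 0*co x 1*co u 2*co v 3 - co w 0*co x 1*co v 2*co u 3 - co x 0*co u 1*co v 2*co w 3 + co x 0*co u 1*co w 2*co v 3 + co x 0*co v 1*co u 2*co w 3 - co x 0*co v 1*co w 2*co u 3 - co x 0*co w 1*co u 2*co v 3 +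 co x 0*co w 1*co v 2*co u 3.
Proof.
rewrite /brv.
have -> : \matrix_(i < 4, j < 4) ([:: u; v; w; x]`_j) i 0 =
   \matrix_(i < 4, j < 4) (fun (a b : nat) => co ([:: u; v; w; x]`_b) a) i j.
  by apply/matrixP => i j; rewrite !mxE /co inord_val.
rewrite (expand_det_row _ ord0) !big_ord_recl big_ord0 /= /cofactor.
rewrite !(expand_det_row _ ord0) !big_ord_recl !big_ord0 /= /cofactor.
rewrite !(expand_det_row _ ord0) !big_ord_recl !big_ord0 /= /cofactor.
rewrite !det_mx11 !mxE /= /bump /= ?add0n ?addn0 ?add1n /=.
ring.
Qed.

Definition lin (u v w : 'cV[F]_4) (i : 'I_4) : F := nth 0 [:: (- co u 1*co v 2*co w 3 + co u 1*co w 2*co v 3 + co v 1*co u 2*co w 3 - co v 1*co w 2*co u 3 - co w 1*co u 2*co v 3 + co w 1*co v 2*co u 3); (co u 0*co v 2*co w 3 - co u 0*co w 2*co v 3 - co v 0*co u 2*co w 3 + co v 0*co w 2*co u 3 + co w 0*co u 2*co v 3 - co w 0*co v 2*co u 3); (- co u 0*co v 1*co w 3 + co u 0*co w 1*co v 3 + co v 0*co u 1*co w 3 - co v 0*co w 1*co u 3 - co w 0*co u 1*co v 3 + co w 0*co v 1*co u 3); (co u 0*co v 1*co w 2 - co u 0*co w 1*co v 2 - co v 0*co u 1*co w 2 + co v 0*co w 1*co u 2 + co w 0*co u 1*co v 2 - co w 0*co v 1*co u 2)] i.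

Lemma co_val (x : 'cV[F]_4) (i : 'I_4) : x i 0 = co x i.
Proof. by rewrite /co inord_val. Qed.

Lemma brv_lin u v w x : brv u v w x = \sum_i lin u v w i * x i 0.
Proof.
under eq_bigr => i _ do rewrite co_val.
rewrite !big_ord_recl big_ord0 /lin /= /bump /= ?add0n ?addn0 ?add1n /= brvE.
ring.
Qed.
Lemma brv_addr u v w x y : brv u v w (x + y) = brv u v w x + brv u v w y.
Proof. rewrite !brvE /co !mxE; ring. Qed.
Lemma brv_0 u v w : brv u v w u = 0. Proof. rewrite brvE; ring. Qed.
Lemma brv_1 u v w : brv u v w v = 0. Proof. rewrite brvE; ring. Qed.
Lemma brv_2 u v w : brv u v w w = 0. Proof. rewrite brvE; ring. Qed.
End S.

Section S2.
Variable F : fieldType.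

Lemma sum_mon2 (G : 'I_4 * 'I_4 -> F) :
  \sum_(t in {: mon2}) G (sval t) = \sum_(ij : 'I_4 * 'I_4 | (ij.1 <= ij.2)%N) G ij.
Proof.
rewrite [RHS](reindex_omap (val : mon2 -> 'I_4 * 'I_4) insub); last first.
  by move=> i Pi; rewrite insubT.
by apply: eq_bigl=> -[i iA]/=; rewrite insubT /= iA eqxx.
Qed.

Lemma sum_pairs (G : 'I_4 * 'I_4 -> F) :
  \sum_(ij : 'I_4 * 'I_4 | (ij.1 <= ij.2)%N) G ij = \sum_(i < 4) \sum_(j < 4 | (i <= j)%N) G (i, j).
Proof. by rewrite pair_big_dep /=; apply: eq_big => -[i j]. Qed.

Definition qcoef (l m : 'I_4 -> F) (ij : 'I_4 * 'I_4) : F :=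
  if ij.1 == ij.2 then l ij.1 * m ij.1 else l ij.1 * m ij.2 + l ij.2 * m ij.1.
Definition qvec (l m : 'I_4 -> F) : 'rV[F]_nmon2 :=
  \row_k qcoef l m (val (enum_val k : mon2)).

Lemma quadform_qvec l m (x : 'cV[F]_4) :
  quadform (qvec l m) x = (\sum_i l i * x i 0) * (\sum_j m j * x j 0).
Proof.
rewrite /quadform.
under eq_bigr => k _ do rewrite mxE /monval.
rewrite -(big_enum_val (fun t : mon2 => qcoef l m (val t) * (x (val t).1 0 * x (val t).2 0))) /=.
rewrite (sum_mon2 (fun ij => qcoef l m ij * (x ij.1 0 * x ij.2 0))) sum_pairs.
rewrite !big_ord_recl !big_ord0.
do 3 rewrite !big_mkcond !big_ord_recl !big_ord0 /= /bump /= ?add0n ?addn0 ?add1n /=.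
rewrite /qcoef /=.
ring.
Qed.

Lemma quadform_brv (u v w u' v' w' x : 'cV[F]_4) :
  quadform (qvec (lin u v w) (lin u' v' w')) x = brv u v w x * brv u' v' w' x.
Proof. by rewrite quadform_qvec -!brv_lin. Qed.

Variable V : nat -> 'cV[F]_4.

Definition Qs (s : nat) (x : 'cV[F]_4) : F :=
  [:: brv (V 0) (V 1) (V 5) x * brv (V 2) (V 3) (V 4) x;
      brv (V 0) (V 1) (V 2) x * brv (V 3) (V 4) (V 5) x;
      brv (V 0) (V 2) (V 4) x * brv (V 1) (V 3) (V 5) x;
      brv (V 0) (V 4) (V 5) x * brv (V 1) (V 2) (V 3) x]`_s.

Definition Qrow (s : nat) : 'rV[F]_nmon2 :=
  [:: qvec (lin (V 0) (V 1) (V 5)) (lin (V 2) (V 3) (V 4));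
      qvec (lin (V 0) (V 1) (V 2)) (lin (V 3) (V 4) (V 5));
      qvec (lin (V 0) (V 2) (V 4)) (lin (V 1) (V 3) (V 5));
      qvec (lin (V 0) (V 4) (V 5)) (lin (V 1) (V 2) (V 3))]`_s.

Lemma quadform_Qrow (s : 'I_4) x : quadform (Qrow s) x = Qs s x.
Proof. by case: s => [[|[|[|[|s]]]] //=] _; rewrite quadform_brv. Qed.

Definition Qmat : 'M[F]_(4, nmon2) := \matrix_(s < 4, k < nmon2) Qrow s 0 k.

Lemma quadform_mul (a : 'rV[F]_4) x :
  quadform (a *m Qmat) x = \sum_(s < 4) a 0 s * Qs s x.
Proof.
rewrite /quadform.
under eq_bigr => k _ do rewrite !mxE big_distrl /=.
rewrite exchange_big /=; apply: eq_bigr => s _.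
rewrite -quadform_Qrow /quadform big_distrr /=; apply: eq_bigr => k _.
by rewrite mxE mulrA.
Qed.

Lemma quadform_mul4 (a : 'rV[F]_4) x :
  quadform (a *m Qmat) x = a 0 (inord 0) * Qs 0 x + a 0 (inord 1) * Qs 1 x
     + a 0 (inord 2) * Qs 2 x + a 0 (inord 3) * Qs 3 x.
Proof.
rewrite quadform_mul.
under eq_bigr => s _ do rewrite -[in a 0 s](inord_val s).
rewrite !big_ord_recl big_ord0 /= /bump /= ?add0n ?addn0 ?add1n /=.
by rewrite !addrA addr0.
Qed.

Lemma Qs_vanish (s : 'I_4) (i : nat) : (i < 6)%N -> Qs s (V i) = 0.
Proof.
rewrite /Qs; case: s => -[|[|[|[|s]]]] //= _;
  case: i => [|[|[|[|[|[|i]]]]]] //= _;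
  by rewrite ?brv_0 ?brv_1 ?brv_2 ?mulr0 ?mul0r.
Qed.
End S2.

Lemma core (F : fieldType) (b0123 b0124 b0125 b0134 b0135 b0145 b0234 b0235 b0245 b0345 b1234 b1235 b1245 b1345 b2345 a1 a2 a3 a4 : F) :
  (b0123*b0145 - b0124*b0135 + b0125*b0134) = 0 ->
  (- b0123*b0245 + b0124*b0235 - b0125*b0234) = 0 ->
  (b0123*b0345 - b0134*b0235 + b0135*b0234) = 0 ->
  (- b0124*b0345 + b0134*b0245 - b0145*b0234) = 0 ->
  (b0125*b0345 - b0135*b0245 + b0145*b0235) = 0 ->
  (b0123*b1245 - b0124*b1235 + b0125*b1234) = 0 ->
  (- b0123*b1345 + b0134*b1235 - b0135*b1234) = 0 ->
  (b0124*b1345 - b0134*b1245 + b0145*b1234) = 0 ->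
  (- b0125*b1345 + b0135*b1245 - b0145*b1235) = 0 ->
  (b0123*b2345 - b0234*b1235 + b0235*b1234) = 0 ->
  (- b0124*b2345 + b0234*b1245 - b0245*b1234) = 0 ->
  (b0125*b2345 - b0235*b1245 + b0245*b1235) = 0 ->
  (b0134*b2345 - b0234*b1345 + b0345*b1234) = 0 ->
  (- b0135*b2345 + b0235*b1345 - b0345*b1235) = 0 ->
  (b0145*b2345 - b0245*b1345 + b0345*b1245) = 0 ->
  (- b0123*b0145*a4 - b0124*b0135*a3) = 0 ->
  (- b0123*b0245*a4 + b0125*b0234*a1) = 0 ->
  (- b0124*b0345*a2 + b0145*b0234*a1) = 0 ->
  (- b0125*b0345*a2 - b0135*b0245*a3) = 0 ->
  (b0124*b1235*a3 + b0125*b1234*a1) = 0 ->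
  (- b0123*b1345*a2 + b0135*b1234*a1) = 0 ->
  (- b0125*b1345*a2 + b0145*b1235*a4) = 0 ->
  (- b0123*b2345*a2 - b0234*b1235*a3) = 0 ->
  (- b0124*b2345*a2 + b0245*b1234*a4) = 0 ->
  (b0234*b1345*a3 + b0345*b1234*a4) = 0 ->
  (- b0135*b2345*a1 + b0345*b1235*a4) = 0 ->
  (- b0145*b2345*a1 - b0245*b1345*a3) = 0 ->
  (b0125 * b0234 * b1345 - b0124 * b2345 * b0135) != 0 -> [/\ a1 = 0, a2 = 0, a3 = 0 & a4 = 0].
Proof.
move=> P01 P02 P03 P04 P05 P12 P13 P14 P15 P23 P24 P25 P34 P35 P45 E01 E02 E04 E05 E12 E13 E15 E23 E24 E34 E35 E45 hII.
set II := (b0125 * b0234 * b1345 - b0124 * b2345 * b0135) in hII *.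
have fD0134_1 : II * (b0134) * a1 = 0.
  transitivity ((- b0123*b1345) * (- b0124*b0345*a2 + b0145*b0234*a1) + (b0124*b0345) * (- b0123*b1345*a2 + b0135*b1234*a1) + (b0234*b1345*a1 - b0345*b1234*a1) * (b0123*b0145 - b0124*b0135 + b0125*b0134) + (b0124*b0345*a1) * (- b0123*b1345 + b0134*b1235 - b0135*b1234) + (b0124*b1345*a1 - b0134*b1245*a1 + b0145*b1234*a1) * (b0123*b0345 - b0134*b0235 + b0135*b0234) + (b0134*b0135*a1) * (- b0124*b2345 + b0234*b1245 - b0245*b1234) + (b0134*b0235*a1) * (b0124*b1345 - b0134*b1245 + b0145*b1234) + (b0134*b0345*a1) * (b0123*b1245 - b0124*b1235 + b0125*b1234) + (b0135*b1234*a1) * (- b0124*b0345 + b0134*b0245 - b0145*b0234)); first by rewrite /II; ring.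
  by rewrite ?P01 ?P02 ?P03 ?P04 ?P05 ?P12 ?P13 ?P14 ?P15 ?P23 ?P24 ?P25 ?P34 ?P35 ?P45 ?E01 ?E02 ?E04 ?E05 ?E12 ?E13 ?E15 ?E23 ?E24 ?E34 ?E35 ?E45; ring.
have fD0134_2 : II * (b0134) * a2 = 0.
  transitivity ((- b0135*b1234) * (- b0124*b0345*a2 + b0145*b0234*a1) + (b0145*b0234) * (- b0123*b1345*a2 + b0135*b1234*a1) + (b0234*b1345*a2 - b0345*b1234*a2) * (b0123*b0145 - b0124*b0135 + b0125*b0134) + (b0124*b0345*a2) * (- b0123*b1345 + b0134*b1235 - b0135*b1234) + (b0124*b1345*a2 - b0134*b1245*a2 + b0145*b1234*a2) * (b0123*b0345 - b0134*b0235 + b0135*b0234) + (b0134*b0135*a2) * (- b0124*b2345 + b0234*b1245 - b0245*b1234) + (b0134*b0235*a2) * (b0124*b1345 - b0134*b1245 + b0145*b1234) + (b0134*b0345*a2) * (b0123*b1245 - b0124*b1235 + b0125*b1234) + (b0135*b1234*a2) * (- b0124*b0345 + b0134*b0245 - b0145*b0234)); first by rewrite /II; ring.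
  by rewrite ?P01 ?P02 ?P03 ?P04 ?P05 ?P12 ?P13 ?P14 ?P15 ?P23 ?P24 ?P25 ?P34 ?P35 ?P45 ?E01 ?E02 ?E04 ?E05 ?E12 ?E13 ?E15 ?E23 ?E24 ?E34 ?E35 ?E45; ring.
have fD0134_3 : II * (b0134) * a3 = 0.
  transitivity ((- b0345*b1234) * (- b0123*b0145*a4 - b0124*b0135*a3) + (- b0123*b0145) * (b0234*b1345*a3 + b0345*b1234*a4) + (b0234*b1345*a3 - b0345*b1234*a3) * (b0123*b0145 - b0124*b0135 + b0125*b0134) + (b0124*b0345*a3) * (- b0123*b1345 + b0134*b1235 - b0135*b1234) + (b0124*b1345*a3 - b0134*b1245*a3 + b0145*b1234*a3) * (b0123*b0345 - b0134*b0235 + b0135*b0234) + (b0134*b0135*a3) * (- b0124*b2345 + b0234*b1245 - b0245*b1234) + (b0134*b0235*a3) * (b0124*b1345 - b0134*b1245 + b0145*b1234) + (b0134*b0345*a3) * (b0123*b1245 - b0124*b1235 + b0125*b1234) + (b0135*b1234*a3) * (- b0124*b0345 + b0134*b0245 - b0145*b0234)); first by rewrite /II; ring.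
  by rewrite ?P01 ?P02 ?P03 ?P04 ?P05 ?P12 ?P13 ?P14 ?P15 ?P23 ?P24 ?P25 ?P34 ?P35 ?P45 ?E01 ?E02 ?E04 ?E05 ?E12 ?E13 ?E15 ?E23 ?E24 ?E34 ?E35 ?E45; ring.
have fD0134_4 : II * (b0134) * a4 = 0.
  transitivity ((b0234*b1345) * (- b0123*b0145*a4 - b0124*b0135*a3) + (b0124*b0135) * (b0234*b1345*a3 + b0345*b1234*a4) + (b0234*b1345*a4 - b0345*b1234*a4) * (b0123*b0145 - b0124*b0135 + b0125*b0134) + (b0124*b0345*a4) * (- b0123*b1345 + b0134*b1235 - b0135*b1234) + (b0124*b1345*a4 - b0134*b1245*a4 + b0145*b1234*a4) * (b0123*b0345 - b0134*b0235 + b0135*b0234) + (b0134*b0135*a4) * (- b0124*b2345 + b0234*b1245 - b0245*b1234) + (b0134*b0235*a4) * (b0124*b1345 - b0134*b1245 + b0145*b1234) + (b0134*b0345*a4) * (b0123*b1245 - b0124*b1235 + b0125*b1234) + (b0135*b1234*a4) * (- b0124*b0345 + b0134*b0245 - b0145*b0234)); first by rewrite /II; ring.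
  by rewrite ?P01 ?P02 ?P03 ?P04 ?P05 ?P12 ?P13 ?P14 ?P15 ?P23 ?P24 ?P25 ?P34 ?P35 ?P45 ?E01 ?E02 ?E04 ?E05 ?E12 ?E13 ?E15 ?E23 ?E24 ?E34 ?E35 ?E45; ring.
have fD1245_1 : II * (b1245) * a1 = 0.
  transitivity ((b0245*b1345) * (b0124*b1235*a3 + b0125*b1234*a1) + (b0124*b1235) * (- b0145*b2345*a1 - b0245*b1345*a3) + (- b0145*b2345*a1) * (b0123*b1245 - b0124*b1235 + b0125*b1234) + (b1245*b2345*a1) * (b0123*b0145 - b0124*b0135 + b0125*b0134) + (b0125*b1345*a1) * (- b0124*b2345 + b0234*b1245 - b0245*b1234) + (b0125*b2345*a1) * (b0124*b1345 - b0134*b1245 + b0145*b1234)); first by rewrite /II; ring.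
  by rewrite ?P01 ?P02 ?P03 ?P04 ?P05 ?P12 ?P13 ?P14 ?P15 ?P23 ?P24 ?P25 ?P34 ?P35 ?P45 ?E01 ?E02 ?E04 ?E05 ?E12 ?E13 ?E15 ?E23 ?E24 ?E34 ?E35 ?E45; ring.
have fD1245_3 : II * (b1245) * a3 = 0.
  transitivity ((- b0145*b2345) * (b0124*b1235*a3 + b0125*b1234*a1) + (- b0125*b1234) * (- b0145*b2345*a1 - b0245*b1345*a3) + (- b0145*b2345*a3) * (b0123*b1245 - b0124*b1235 + b0125*b1234) + (b1245*b2345*a3) * (b0123*b0145 - b0124*b0135 + b0125*b0134) + (b0125*b1345*a3) * (- b0124*b2345 + b0234*b1245 - b0245*b1234) + (b0125*b2345*a3) * (b0124*b1345 - b0134*b1245 + b0145*b1234)); first by rewrite /II; ring.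
  by rewrite ?P01 ?P02 ?P03 ?P04 ?P05 ?P12 ?P13 ?P14 ?P15 ?P23 ?P24 ?P25 ?P34 ?P35 ?P45 ?E01 ?E02 ?E04 ?E05 ?E12 ?E13 ?E15 ?E23 ?E24 ?E34 ?E35 ?E45; ring.
have fD1245_2 : II * (b1245) * a2 = 0.
  transitivity ((- b0245*b1234) * (- b0125*b1345*a2 + b0145*b1235*a4) + (b0145*b1235) * (- b0124*b2345*a2 + b0245*b1234*a4) + (- b0145*b2345*a2) * (b0123*b1245 - b0124*b1235 + b0125*b1234) + (b1245*b2345*a2) * (b0123*b0145 - b0124*b0135 + b0125*b0134) + (b0125*b1345*a2) * (- b0124*b2345 + b0234*b1245 - b0245*b1234) + (b0125*b2345*a2) * (b0124*b1345 - b0134*b1245 + b0145*b1234)); first by rewrite /II; ring.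
  by rewrite ?P01 ?P02 ?P03 ?P04 ?P05 ?P12 ?P13 ?P14 ?P15 ?P23 ?P24 ?P25 ?P34 ?P35 ?P45 ?E01 ?E02 ?E04 ?E05 ?E12 ?E13 ?E15 ?E23 ?E24 ?E34 ?E35 ?E45; ring.
have fD1245_4 : II * (b1245) * a4 = 0.
  transitivity ((- b0124*b2345) * (- b0125*b1345*a2 + b0145*b1235*a4) + (b0125*b1345) * (- b0124*b2345*a2 + b0245*b1234*a4) + (- b0145*b2345*a4) * (b0123*b1245 - b0124*b1235 + b0125*b1234) + (b1245*b2345*a4) * (b0123*b0145 - b0124*b0135 + b0125*b0134) + (b0125*b1345*a4) * (- b0124*b2345 + b0234*b1245 - b0245*b1234) + (b0125*b2345*a4) * (b0124*b1345 - b0134*b1245 + b0145*b1234)); first by rewrite /II; ring.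
  by rewrite ?P01 ?P02 ?P03 ?P04 ?P05 ?P12 ?P13 ?P14 ?P15 ?P23 ?P24 ?P25 ?P34 ?P35 ?P45 ?E01 ?E02 ?E04 ?E05 ?E12 ?E13 ?E15 ?E23 ?E24 ?E34 ?E35 ?E45; ring.
have fD0235_1 : II * (b0235) * a1 = 0.
  transitivity ((b0345*b1235) * (- b0123*b0245*a4 + b0125*b0234*a1) + (b0123*b0245) * (- b0135*b2345*a1 + b0345*b1235*a4) + (- b0235*b1245*a1 + b0245*b1235*a1) * (b0123*b0345 - b0134*b0235 + b0135*b0234) + (- b0235*b1345*a1 + b0345*b1235*a1) * (- b0123*b0245 + b0124*b0235 - b0125*b0234) + (b0235*b0235*a1) * (b0124*b1345 - b0134*b1245 + b0145*b1234) + (b0235*b0245*a1) * (- b0123*b1345 + b0134*b1235 - b0135*b1234) + (b0235*b0345*a1) * (b0123*b1245 - b0124*b1235 + b0125*b1234) + (- b0235*b1234*a1) * (b0125*b0345 - b0135*b0245 + b0145*b0235) + (b0135*b0235*a1) * (- b0124*b2345 + b0234*b1245 - b0245*b1234) + (b0135*b0245*a1) * (b0123*b2345 - b0234*b1235 + b0235*b1234)); first by rewrite /II; ring.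
  by rewrite ?P01 ?P02 ?P03 ?P04 ?P05 ?P12 ?P13 ?P14 ?P15 ?P23 ?P24 ?P25 ?P34 ?P35 ?P45 ?E01 ?E02 ?E04 ?E05 ?E12 ?E13 ?E15 ?E23 ?E24 ?E34 ?E35 ?E45; ring.
have fD0235_4 : II * (b0235) * a4 = 0.
  transitivity ((b0135*b2345) * (- b0123*b0245*a4 + b0125*b0234*a1) + (b0125*b0234) * (- b0135*b2345*a1 + b0345*b1235*a4) + (- b0235*b1245*a4 + b0245*b1235*a4) * (b0123*b0345 - b0134*b0235 + b0135*b0234) + (- b0235*b1345*a4 + b0345*b1235*a4) * (- b0123*b0245 + b0124*b0235 - b0125*b0234) + (b0235*b0235*a4) * (b0124*b1345 - b0134*b1245 + b0145*b1234) + (b0235*b0245*a4) * (- b0123*b1345 + b0134*b1235 - b0135*b1234) + (b0235*b0345*a4) * (b0123*b1245 - b0124*b1235 + b0125*b1234) + (- b0235*b1234*a4) * (b0125*b0345 - b0135*b0245 + b0145*b0235) + (b0135*b0235*a4) * (- b0124*b2345 + b0234*b1245 - b0245*b1234) + (b0135*b0245*a4) * (b0123*b2345 - b0234*b1235 + b0235*b1234)); first by rewrite /II; ring.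
  by rewrite ?P01 ?P02 ?P03 ?P04 ?P05 ?P12 ?P13 ?P14 ?P15 ?P23 ?P24 ?P25 ?P34 ?P35 ?P45 ?E01 ?E02 ?E04 ?E05 ?E12 ?E13 ?E15 ?E23 ?E24 ?E34 ?E35 ?E45; ring.
have fD0235_2 : II * (b0235) * a2 = 0.
  transitivity ((- b0234*b1235) * (- b0125*b0345*a2 - b0135*b0245*a3) + (b0135*b0245) * (- b0123*b2345*a2 - b0234*b1235*a3) + (- b0235*b1245*a2 + b0245*b1235*a2) * (b0123*b0345 - b0134*b0235 + b0135*b0234) + (- b0235*b1345*a2 + b0345*b1235*a2) * (- b0123*b0245 + b0124*b0235 - b0125*b0234) + (b0235*b0235*a2) * (b0124*b1345 - b0134*b1245 + b0145*b1234) + (b0235*b0245*a2) * (- b0123*b1345 + b0134*b1235 - b0135*b1234) + (b0235*b0345*a2) * (b0123*b1245 - b0124*b1235 + b0125*b1234) + (- b0235*b1234*a2) * (b0125*b0345 - b0135*b0245 + b0145*b0235) + (b0135*b0235*a2) * (- b0124*b2345 + b0234*b1245 - b0245*b1234) + (b0135*b0245*a2) * (b0123*b2345 - b0234*b1235 + b0235*b1234)); first by rewrite /II; ring.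
  by rewrite ?P01 ?P02 ?P03 ?P04 ?P05 ?P12 ?P13 ?P14 ?P15 ?P23 ?P24 ?P25 ?P34 ?P35 ?P45 ?E01 ?E02 ?E04 ?E05 ?E12 ?E13 ?E15 ?E23 ?E24 ?E34 ?E35 ?E45; ring.
have fD0235_3 : II * (b0235) * a3 = 0.
  transitivity ((b0123*b2345) * (- b0125*b0345*a2 - b0135*b0245*a3) + (- b0125*b0345) * (- b0123*b2345*a2 - b0234*b1235*a3) + (- b0235*b1245*a3 + b0245*b1235*a3) * (b0123*b0345 - b0134*b0235 + b0135*b0234) + (- b0235*b1345*a3 + b0345*b1235*a3) * (- b0123*b0245 + b0124*b0235 - b0125*b0234) + (b0235*b0235*a3) * (b0124*b1345 - b0134*b1245 + b0145*b1234) + (b0235*b0245*a3) * (- b0123*b1345 + b0134*b1235 - b0135*b1234) + (b0235*b0345*a3) * (b0123*b1245 - b0124*b1235 + b0125*b1234) + (- b0235*b1234*a3) * (b0125*b0345 - b0135*b0245 + b0145*b0235) + (b0135*b0235*a3) * (- b0124*b2345 + b0234*b1245 - b0245*b1234) + (b0135*b0245*a3) * (b0123*b2345 - b0234*b1235 + b0235*b1234)); first by rewrite /II; ring.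
  by rewrite ?P01 ?P02 ?P03 ?P04 ?P05 ?P12 ?P13 ?P14 ?P15 ?P23 ?P24 ?P25 ?P34 ?P35 ?P45 ?E01 ?E02 ?E04 ?E05 ?E12 ?E13 ?E15 ?E23 ?E24 ?E34 ?E35 ?E45; ring.
have fT015_2 : II * (- b0125*b0135*b0145) * a2 = 0.
  transitivity ((- b0135*b0145*b0245*b1235) * (- b0123*b0145*a4 - b0124*b0135*a3) + (b0124*b0135*b0145*b1235) * (- b0125*b0345*a2 - b0135*b0245*a3) + (- b0123*b0135*b0145*b0245) * (- b0125*b1345*a2 + b0145*b1235*a4) + (- b0125*b0135*b0245*b1345*a2 + b0125*b0135*b0345*b1245*a2) * (b0123*b0145 - b0124*b0135 + b0125*b0134) + (b0125*b0125*b0135*b0345*a2 - b0125*b0135*b0135*b0245*a2) * (b0124*b1345 - b0134*b1245 + b0145*b1234) + (b0125*b0125*b0135*b1345*a2 - b0125*b0135*b0135*b1245*a2) * (- b0124*b0345 + b0134*b0245 - b0145*b0234) + (- b0125*b0135*b0145*b0345*a2) * (b0123*b1245 - b0124*b1235 + b0125*b1234) + (- b0125*b0135*b0135*b0145*a2) * (- b0124*b2345 + b0234*b1245 - b0245*b1234)); first by rewrite /II; ring.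
  by rewrite ?P01 ?P02 ?P03 ?P04 ?P05 ?P12 ?P13 ?P14 ?P15 ?P23 ?P24 ?P25 ?P34 ?P35 ?P45 ?E01 ?E02 ?E04 ?E05 ?E12 ?E13 ?E15 ?E23 ?E24 ?E34 ?E35 ?E45; ring.
have fT015_3 : II * (- b0125*b0135*b0145) * a3 = 0.
  transitivity ((b0125*b0145*b0345*b1235) * (- b0123*b0145*a4 - b0124*b0135*a3) + (- b0123*b0125*b0145*b1345) * (- b0125*b0345*a2 - b0135*b0245*a3) + (b0123*b0125*b0145*b0345) * (- b0125*b1345*a2 + b0145*b1235*a4) + (- b0125*b0135*b0245*b1345*a3 + b0125*b0135*b0345*b1245*a3) * (b0123*b0145 - b0124*b0135 + b0125*b0134) + (b0125*b0125*b0135*b0345*a3 - b0125*b0135*b0135*b0245*a3) * (b0124*b1345 - b0134*b1245 + b0145*b1234) + (b0125*b0125*b0135*b1345*a3 - b0125*b0135*b0135*b1245*a3) * (- b0124*b0345 + b0134*b0245 - b0145*b0234) + (- b0125*b0135*b0145*b0345*a3) * (b0123*b1245 - b0124*b1235 + b0125*b1234) + (- b0125*b0135*b0135*b0145*a3) * (- b0124*b2345 + b0234*b1245 - b0245*b1234)); first by rewrite /II; ring.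
  by rewrite ?P01 ?P02 ?P03 ?P04 ?P05 ?P12 ?P13 ?P14 ?P15 ?P23 ?P24 ?P25 ?P34 ?P35 ?P45 ?E01 ?E02 ?E04 ?E05 ?E12 ?E13 ?E15 ?E23 ?E24 ?E34 ?E35 ?E45; ring.
have fT015_4 : II * (- b0125*b0135*b0145) * a4 = 0.
  transitivity ((- b0125*b0135*b0245*b1345) * (- b0123*b0145*a4 - b0124*b0135*a3) + (b0124*b0125*b0135*b1345) * (- b0125*b0345*a2 - b0135*b0245*a3) + (- b0124*b0125*b0135*b0345) * (- b0125*b1345*a2 + b0145*b1235*a4) + (- b0125*b0135*b0245*b1345*a4 + b0125*b0135*b0345*b1245*a4) * (b0123*b0145 - b0124*b0135 + b0125*b0134) + (b0125*b0125*b0135*b0345*a4 - b0125*b0135*b0135*b0245*a4) * (b0124*b1345 - b0134*b1245 + b0145*b1234) + (b0125*b0125*b0135*b1345*a4 - b0125*b0135*b0135*b1245*a4) * (- b0124*b0345 + b0134*b0245 - b0145*b0234) + (- b0125*b0135*b0145*b0345*a4) * (b0123*b1245 - b0124*b1235 + b0125*b1234) + (- b0125*b0135*b0135*b0145*a4) * (- b0124*b2345 + b0234*b1245 - b0245*b1234)); first by rewrite /II; ring.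
  by rewrite ?P01 ?P02 ?P03 ?P04 ?P05 ?P12 ?P13 ?P14 ?P15 ?P23 ?P24 ?P25 ?P34 ?P35 ?P45 ?E01 ?E02 ?E04 ?E05 ?E12 ?E13 ?E15 ?E23 ?E24 ?E34 ?E35 ?E45; ring.
have fT234_2 : II * (b0234*b1234*b2345) * a2 = 0.
  transitivity ((b0234*b0245*b1234*b1345) * (- b0123*b2345*a2 - b0234*b1235*a3) + (- b0234*b0345*b1234*b1235) * (- b0124*b2345*a2 + b0245*b1234*a4) + (b0234*b0245*b1234*b1235) * (b0234*b1345*a3 + b0345*b1234*a4) + (- b0234*b1234*b1345*b2345*a2) * (- b0123*b0245 + b0124*b0235 - b0125*b0234) + (b0124*b0234*b1345*b2345*a2) * (b0123*b2345 - b0234*b1235 + b0235*b1234) + (b0124*b0234*b2345*b2345*a2) * (- b0123*b1345 + b0134*b1235 - b0135*b1234) + (b0134*b0234*b1235*b2345*a2) * (- b0124*b2345 + b0234*b1245 - b0245*b1234) + (b0234*b0234*b1235*b2345*a2) * (b0124*b1345 - b0134*b1245 + b0145*b1234) + (b0234*b1234*b1235*b2345*a2) * (- b0124*b0345 + b0134*b0245 - b0145*b0234)); first by rewrite /II; ring.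
  by rewrite ?P01 ?P02 ?P03 ?P04 ?P05 ?P12 ?P13 ?P14 ?P15 ?P23 ?P24 ?P25 ?P34 ?P35 ?P45 ?E01 ?E02 ?E04 ?E05 ?E12 ?E13 ?E15 ?E23 ?E24 ?E34 ?E35 ?E45; ring.
have fT234_3 : II * (b0234*b1234*b2345) * a3 = 0.
  transitivity ((- b0124*b0345*b1234*b2345) * (- b0123*b2345*a2 - b0234*b1235*a3) + (b0123*b0345*b1234*b2345) * (- b0124*b2345*a2 + b0245*b1234*a4) + (- b0123*b0245*b1234*b2345) * (b0234*b1345*a3 + b0345*b1234*a4) + (- b0234*b1234*b1345*b2345*a3) * (- b0123*b0245 + b0124*b0235 - b0125*b0234) + (b0124*b0234*b1345*b2345*a3) * (b0123*b2345 - b0234*b1235 + b0235*b1234) + (b0124*b0234*b2345*b2345*a3) * (- b0123*b1345 + b0134*b1235 - b0135*b1234) + (b0134*b0234*b1235*b2345*a3) * (- b0124*b2345 + b0234*b1245 - b0245*b1234) + (b0234*b0234*b1235*b2345*a3) * (b0124*b1345 - b0134*b1245 + b0145*b1234) + (b0234*b1234*b1235*b2345*a3) * (- b0124*b0345 + b0134*b0245 - b0145*b0234)); first by rewrite /II; ring.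
  by rewrite ?P01 ?P02 ?P03 ?P04 ?P05 ?P12 ?P13 ?P14 ?P15 ?P23 ?P24 ?P25 ?P34 ?P35 ?P45 ?E01 ?E02 ?E04 ?E05 ?E12 ?E13 ?E15 ?E23 ?E24 ?E34 ?E35 ?E45; ring.
have fT234_4 : II * (b0234*b1234*b2345) * a4 = 0.
  transitivity ((b0124*b0234*b1345*b2345) * (- b0123*b2345*a2 - b0234*b1235*a3) + (- b0123*b0234*b1345*b2345) * (- b0124*b2345*a2 + b0245*b1234*a4) + (b0124*b0234*b1235*b2345) * (b0234*b1345*a3 + b0345*b1234*a4) + (- b0234*b1234*b1345*b2345*a4) * (- b0123*b0245 + b0124*b0235 - b0125*b0234) + (b0124*b0234*b1345*b2345*a4) * (b0123*b2345 - b0234*b1235 + b0235*b1234) + (b0124*b0234*b2345*b2345*a4) * (- b0123*b1345 + b0134*b1235 - b0135*b1234) + (b0134*b0234*b1235*b2345*a4) * (- b0124*b2345 + b0234*b1245 - b0245*b1234) + (b0234*b0234*b1235*b2345*a4) * (b0124*b1345 - b0134*b1245 + b0145*b1234) + (b0234*b1234*b1235*b2345*a4) * (- b0124*b0345 + b0134*b0245 - b0145*b0234)); first by rewrite /II; ring.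
  by rewrite ?P01 ?P02 ?P03 ?P04 ?P05 ?P12 ?P13 ?P14 ?P15 ?P23 ?P24 ?P25 ?P34 ?P35 ?P45 ?E01 ?E02 ?E04 ?E05 ?E12 ?E13 ?E15 ?E23 ?E24 ?E34 ?E35 ?E45; ring.
have fT012_1 : II * (b0123*b0124*b0125) * a1 = 0.
  transitivity ((b0123*b0124*b0245*b1235) * (- b0123*b0145*a4 - b0124*b0135*a3) + (- b0123*b0124*b0145*b1235) * (- b0123*b0245*a4 + b0125*b0234*a1) + (b0123*b0124*b0135*b0245) * (b0124*b1235*a3 + b0125*b1234*a1) + (b0123*b0124*b0125*b0245*a1 - b0124*b0124*b0125*b0235*a1) * (- b0123*b1345 + b0134*b1235 - b0135*b1234) + (- b0123*b0124*b0125*b1345*a1 - b0123*b0124*b0145*b1235*a1 + b0124*b0124*b0135*b1235*a1) * (- b0123*b0245 + b0124*b0235 - b0125*b0234) + (- b0123*b0124*b0245*b1235*a1 + b0124*b0124*b0235*b1235*a1) * (b0123*b0145 - b0124*b0135 + b0125*b0134) + (- b0124*b0124*b0125*b0135*a1) * (b0123*b2345 - b0234*b1235 + b0235*b1234)); first by rewrite /II; ring.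
  by rewrite ?P01 ?P02 ?P03 ?P04 ?P05 ?P12 ?P13 ?P14 ?P15 ?P23 ?P24 ?P25 ?P34 ?P35 ?P45 ?E01 ?E02 ?E04 ?E05 ?E12 ?E13 ?E15 ?E23 ?E24 ?E34 ?E35 ?E45; ring.
have fT012_3 : II * (b0123*b0124*b0125) * a3 = 0.
  transitivity ((- b0123*b0125*b0245*b1234) * (- b0123*b0145*a4 - b0124*b0135*a3) + (b0123*b0125*b0145*b1234) * (- b0123*b0245*a4 + b0125*b0234*a1) + (- b0123*b0125*b0145*b0234) * (b0124*b1235*a3 + b0125*b1234*a1) + (b0123*b0124*b0125*b0245*a3 - b0124*b0124*b0125*b0235*a3) * (- b0123*b1345 + b0134*b1235 - b0135*b1234) + (- b0123*b0124*b0125*b1345*a3 - b0123*b0124*b0145*b1235*a3 + b0124*b0124*b0135*b1235*a3) * (- b0123*b0245 + b0124*b0235 - b0125*b0234) + (- b0123*b0124*b0245*b1235*a3 + b0124*b0124*b0235*b1235*a3) * (b0123*b0145 - b0124*b0135 + b0125*b0134) + (- b0124*b0124*b0125*b0135*a3) * (b0123*b2345 - b0234*b1235 + b0235*b1234)); first by rewrite /II; ring.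
  by rewrite ?P01 ?P02 ?P03 ?P04 ?P05 ?P12 ?P13 ?P14 ?P15 ?P23 ?P24 ?P25 ?P34 ?P35 ?P45 ?E01 ?E02 ?E04 ?E05 ?E12 ?E13 ?E15 ?E23 ?E24 ?E34 ?E35 ?E45; ring.
have fT012_4 : II * (b0123*b0124*b0125) * a4 = 0.
  transitivity ((b0124*b0125*b0234*b1235) * (- b0123*b0145*a4 - b0124*b0135*a3) + (- b0124*b0125*b0135*b1234) * (- b0123*b0245*a4 + b0125*b0234*a1) + (b0124*b0125*b0135*b0234) * (b0124*b1235*a3 + b0125*b1234*a1) + (b0123*b0124*b0125*b0245*a4 - b0124*b0124*b0125*b0235*a4) * (- b0123*b1345 + b0134*b1235 - b0135*b1234) + (- b0123*b0124*b0125*b1345*a4 - b0123*b0124*b0145*b1235*a4 + b0124*b0124*b0135*b1235*a4) * (- b0123*b0245 + b0124*b0235 - b0125*b0234) + (- b0123*b0124*b0245*b1235*a4 + b0124*b0124*b0235*b1235*a4) * (b0123*b0145 - b0124*b0135 + b0125*b0134) + (- b0124*b0124*b0125*b0135*a4) * (b0123*b2345 - b0234*b1235 + b0235*b1234)); first by rewrite /II; ring.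
  by rewrite ?P01 ?P02 ?P03 ?P04 ?P05 ?P12 ?P13 ?P14 ?P15 ?P23 ?P24 ?P25 ?P34 ?P35 ?P45 ?E01 ?E02 ?E04 ?E05 ?E12 ?E13 ?E15 ?E23 ?E24 ?E34 ?E35 ?E45; ring.
have fT345_1 : II * (- b0345*b1345*b2345) * a1 = 0.
  transitivity ((- b0245*b0345*b1235*b1345) * (b0234*b1345*a3 + b0345*b1234*a4) + (b0245*b0345*b1234*b1345) * (- b0135*b2345*a1 + b0345*b1235*a4) + (- b0234*b0345*b1235*b1345) * (- b0145*b2345*a1 - b0245*b1345*a3) + (b0345*b1345*b1345*b2345*a1) * (- b0123*b0245 + b0124*b0235 - b0125*b0234) + (- b0135*b0345*b1345*b2345*a1) * (- b0124*b2345 + b0234*b1245 - b0245*b1234) + (- b0235*b0345*b1345*b2345*a1) * (b0124*b1345 - b0134*b1245 + b0145*b1234) + (b0345*b1245*b1345*b2345*a1) * (b0123*b0345 - b0134*b0235 + b0135*b0234) + (- b0245*b0345*b1345*b2345*a1) * (- b0123*b1345 + b0134*b1235 - b0135*b1234) + (- b0345*b0345*b1345*b2345*a1) * (b0123*b1245 - b0124*b1235 + b0125*b1234) + (b0345*b1235*b1345*b2345*a1) * (- b0124*b0345 + b0134*b0245 - b0145*b0234) + (b0345*b1234*b1345*b2345*a1) * (b0125*b0345 - b0135*b0245 + b0145*b0235)); first by rewrite /II; ring.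
  by rewrite ?P01 ?P02 ?P03 ?P04 ?P05 ?P12 ?P13 ?P14 ?P15 ?P23 ?P24 ?P25 ?P34 ?P35 ?P45 ?E01 ?E02 ?E04 ?E05 ?E12 ?E13 ?E15 ?E23 ?E24 ?E34 ?E35 ?E45; ring.
have fT345_3 : II * (- b0345*b1345*b2345) * a3 = 0.
  transitivity ((b0145*b0345*b1235*b2345) * (b0234*b1345*a3 + b0345*b1234*a4) + (- b0145*b0345*b1234*b2345) * (- b0135*b2345*a1 + b0345*b1235*a4) + (b0135*b0345*b1234*b2345) * (- b0145*b2345*a1 - b0245*b1345*a3) + (b0345*b1345*b1345*b2345*a3) * (- b0123*b0245 + b0124*b0235 - b0125*b0234) + (- b0135*b0345*b1345*b2345*a3) * (- b0124*b2345 + b0234*b1245 - b0245*b1234) + (- b0235*b0345*b1345*b2345*a3) * (b0124*b1345 - b0134*b1245 + b0145*b1234) + (b0345*b1245*b1345*b2345*a3) * (b0123*b0345 - b0134*b0235 + b0135*b0234) + (- b0245*b0345*b1345*b2345*a3) * (- b0123*b1345 + b0134*b1235 - b0135*b1234) + (- b0345*b0345*b1345*b2345*a3) * (b0123*b1245 - b0124*b1235 + b0125*b1234) + (b0345*b1235*b1345*b2345*a3) * (- b0124*b0345 + b0134*b0245 - b0145*b0234) + (b0345*b1234*b1345*b2345*a3) * (b0125*b0345 - b0135*b0245 + b0145*b0235)); first by rewrite /II; ring.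
  by rewrite ?P01 ?P02 ?P03 ?P04 ?P05 ?P12 ?P13 ?P14 ?P15 ?P23 ?P24 ?P25 ?P34 ?P35 ?P45 ?E01 ?E02 ?E04 ?E05 ?E12 ?E13 ?E15 ?E23 ?E24 ?E34 ?E35 ?E45; ring.
have fT345_4 : II * (- b0345*b1345*b2345) * a4 = 0.
  transitivity ((- b0135*b0245*b1345*b2345) * (b0234*b1345*a3 + b0345*b1234*a4) + (b0145*b0234*b1345*b2345) * (- b0135*b2345*a1 + b0345*b1235*a4) + (- b0135*b0234*b1345*b2345) * (- b0145*b2345*a1 - b0245*b1345*a3) + (b0345*b1345*b1345*b2345*a4) * (- b0123*b0245 + b0124*b0235 - b0125*b0234) + (- b0135*b0345*b1345*b2345*a4) * (- b0124*b2345 + b0234*b1245 - b0245*b1234) + (- b0235*b0345*b1345*b2345*a4) * (b0124*b1345 - b0134*b1245 + b0145*b1234) + (b0345*b1245*b1345*b2345*a4) * (b0123*b0345 - b0134*b0235 + b0135*b0234) + (- b0245*b0345*b1345*b2345*a4) * (- b0123*b1345 + b0134*b1235 - b0135*b1234) + (- b0345*b0345*b1345*b2345*a4) * (b0123*b1245 - b0124*b1235 + b0125*b1234) + (b0345*b1235*b1345*b2345*a4) * (- b0124*b0345 + b0134*b0245 - b0145*b0234) + (b0345*b1234*b1345*b2345*a4) * (b0125*b0345 - b0135*b0245 + b0145*b0235)); first by rewrite /II; ring.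
  by rewrite ?P01 ?P02 ?P03 ?P04 ?P05 ?P12 ?P13 ?P14 ?P15 ?P23 ?P24 ?P25 ?P34 ?P35 ?P45 ?E01 ?E02 ?E04 ?E05 ?E12 ?E13 ?E15 ?E23 ?E24 ?E34 ?E35 ?E45; ring.
have fT024_1 : II * (- b0124*b0234*b0245) * a1 = 0.
  transitivity ((- b0124*b0245*b0345*b1234) * (- b0123*b0245*a4 + b0125*b0234*a1) + (b0123*b0124*b0245*b2345) * (- b0124*b0345*a2 + b0145*b0234*a1) + (- b0123*b0124*b0245*b0345) * (- b0124*b2345*a2 + b0245*b1234*a4) + (- b0124*b0234*b0235*b0245*a1) * (b0124*b1345 - b0134*b1245 + b0145*b1234) + (- b0124*b0234*b0245*b0245*a1) * (- b0123*b1345 + b0134*b1235 - b0135*b1234) + (- b0124*b0134*b0245*b2345*a1 + b0124*b0234*b0245*b1345*a1 - b0124*b0245*b0345*b1234*a1) * (- b0123*b0245 + b0124*b0235 - b0125*b0234) + (- b0124*b0134*b0235*b0245*a1) * (- b0124*b2345 + b0234*b1245 - b0245*b1234) + (- b0124*b0134*b0245*b0245*a1) * (b0123*b2345 - b0234*b1235 + b0235*b1234) + (- b0124*b0234*b0245*b2345*a1) * (b0123*b0145 - b0124*b0135 + b0125*b0134) + (- b0124*b0235*b0245*b1234*a1) * (- b0124*b0345 + b0134*b0245 - b0145*b0234) + (- b0124*b0245*b0245*b1234*a1) * (b0123*b0345 - b0134*b0235 + b0135*b0234)); first by rewrite /II; ring.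
  by rewrite ?P01 ?P02 ?P03 ?P04 ?P05 ?P12 ?P13 ?P14 ?P15 ?P23 ?P24 ?P25 ?P34 ?P35 ?P45 ?E01 ?E02 ?E04 ?E05 ?E12 ?E13 ?E15 ?E23 ?E24 ?E34 ?E35 ?E45; ring.
have fT024_2 : II * (- b0124*b0234*b0245) * a2 = 0.
  transitivity ((- b0145*b0234*b0245*b1234) * (- b0123*b0245*a4 + b0125*b0234*a1) + (b0125*b0234*b0245*b1234) * (- b0124*b0345*a2 + b0145*b0234*a1) + (- b0123*b0145*b0234*b0245) * (- b0124*b2345*a2 + b0245*b1234*a4) + (- b0124*b0234*b0235*b0245*a2) * (b0124*b1345 - b0134*b1245 + b0145*b1234) + (- b0124*b0234*b0245*b0245*a2) * (- b0123*b1345 + b0134*b1235 - b0135*b1234) + (- b0124*b0134*b0245*b2345*a2 + b0124*b0234*b0245*b1345*a2 - b0124*b0245*b0345*b1234*a2) * (- b0123*b0245 + b0124*b0235 - b0125*b0234) + (- b0124*b0134*b0235*b0245*a2) * (- b0124*b2345 + b0234*b1245 - b0245*b1234) + (- b0124*b0134*b0245*b0245*a2) * (b0123*b2345 - b0234*b1235 + b0235*b1234) + (- b0124*b0234*b0245*b2345*a2) * (b0123*b0145 - b0124*b0135 + b0125*b0134) + (- b0124*b0235*b0245*b1234*a2) * (- b0124*b0345 + b0134*b0245 - b0145*b0234) + (- b0124*b0245*b0245*b1234*a2) * (b0123*b0345 - b0134*b0235 + b0135*b0234)); first by rewrite /II; ring.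
  by rewrite ?P01 ?P02 ?P03 ?P04 ?P05 ?P12 ?P13 ?P14 ?P15 ?P23 ?P24 ?P25 ?P34 ?P35 ?P45 ?E01 ?E02 ?E04 ?E05 ?E12 ?E13 ?E15 ?E23 ?E24 ?E34 ?E35 ?E45; ring.
have fT024_4 : II * (- b0124*b0234*b0245) * a4 = 0.
  transitivity ((- b0124*b0145*b0234*b2345) * (- b0123*b0245*a4 + b0125*b0234*a1) + (b0124*b0125*b0234*b2345) * (- b0124*b0345*a2 + b0145*b0234*a1) + (- b0124*b0125*b0234*b0345) * (- b0124*b2345*a2 + b0245*b1234*a4) + (- b0124*b0234*b0235*b0245*a4) * (b0124*b1345 - b0134*b1245 + b0145*b1234) + (- b0124*b0234*b0245*b0245*a4) * (- b0123*b1345 + b0134*b1235 - b0135*b1234) + (- b0124*b0134*b0245*b2345*a4 + b0124*b0234*b0245*b1345*a4 - b0124*b0245*b0345*b1234*a4) * (- b0123*b0245 + b0124*b0235 - b0125*b0234) + (- b0124*b0134*b0235*b0245*a4) * (- b0124*b2345 + b0234*b1245 - b0245*b1234) + (- b0124*b0134*b0245*b0245*a4) * (b0123*b2345 - b0234*b1235 + b0235*b1234) + (- b0124*b0234*b0245*b2345*a4) * (b0123*b0145 - b0124*b0135 + b0125*b0134) + (- b0124*b0235*b0245*b1234*a4) * (- b0124*b0345 + b0134*b0245 - b0145*b0234) + (- b0124*b0245*b0245*b1234*a4) * (b0123*b0345 - b0134*b0235 + b0135*b0234)); first by rewrite /II; ring.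
  by rewrite ?P01 ?P02 ?P03 ?P04 ?P05 ?P12 ?P13 ?P14 ?P15 ?P23 ?P24 ?P25 ?P34 ?P35 ?P45 ?E01 ?E02 ?E04 ?E05 ?E12 ?E13 ?E15 ?E23 ?E24 ?E34 ?E35 ?E45; ring.
have fT135_1 : II * (b0135*b1235*b1345) * a1 = 0.
  transitivity ((b0125*b0345*b1235*b1345) * (- b0123*b1345*a2 + b0135*b1234*a1) + (- b0123*b0345*b1235*b1345) * (- b0125*b1345*a2 + b0145*b1235*a4) + (b0123*b0145*b1235*b1345) * (- b0135*b2345*a1 + b0345*b1235*a4) + (b0135*b0235*b1235*b1345*a1) * (b0124*b1345 - b0134*b1245 + b0145*b1234) + (- b0125*b0135*b1345*b1345*a1 + b0135*b0135*b1245*b1345*a1) * (b0123*b2345 - b0234*b1235 + b0235*b1234) + (- b0125*b0135*b1345*b2345*a1 + b0135*b0235*b1245*b1345*a1) * (- b0123*b1345 + b0134*b1235 - b0135*b1234) + (- b0135*b0135*b1345*b2345*a1 + b0135*b0235*b1345*b1345*a1) * (b0123*b1245 - b0124*b1235 + b0125*b1234) + (b0135*b1235*b1345*b2345*a1) * (b0123*b0145 - b0124*b0135 + b0125*b0134) + (b0135*b0135*b1235*b1345*a1) * (- b0124*b2345 + b0234*b1245 - b0245*b1234) + (- b0135*b1234*b1235*b1345*a1) * (b0125*b0345 - b0135*b0245 + b0145*b0235)); first by rewrite /II; ring.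
  by rewrite ?P01 ?P02 ?P03 ?P04 ?P05 ?P12 ?P13 ?P14 ?P15 ?P23 ?P24 ?P25 ?P34 ?P35 ?P45 ?E01 ?E02 ?E04 ?E05 ?E12 ?E13 ?E15 ?E23 ?E24 ?E34 ?E35 ?E45; ring.
have fT135_2 : II * (b0135*b1235*b1345) * a2 = 0.
  transitivity ((b0135*b0145*b1235*b2345) * (- b0123*b1345*a2 + b0135*b1234*a1) + (- b0135*b0345*b1234*b1235) * (- b0125*b1345*a2 + b0145*b1235*a4) + (b0135*b0145*b1234*b1235) * (- b0135*b2345*a1 + b0345*b1235*a4) + (b0135*b0235*b1235*b1345*a2) * (b0124*b1345 - b0134*b1245 + b0145*b1234) + (- b0125*b0135*b1345*b1345*a2 + b0135*b0135*b1245*b1345*a2) * (b0123*b2345 - b0234*b1235 + b0235*b1234) + (- b0125*b0135*b1345*b2345*a2 + b0135*b0235*b1245*b1345*a2) * (- b0123*b1345 + b0134*b1235 - b0135*b1234) + (- b0135*b0135*b1345*b2345*a2 + b0135*b0235*b1345*b1345*a2) * (b0123*b1245 - b0124*b1235 + b0125*b1234) + (b0135*b1235*b1345*b2345*a2) * (b0123*b0145 - b0124*b0135 + b0125*b0134) + (b0135*b0135*b1235*b1345*a2) * (- b0124*b2345 + b0234*b1245 - b0245*b1234) + (- b0135*b1234*b1235*b1345*a2) * (b0125*b0345 - b0135*b0245 + b0145*b0235)); first by rewrite /II; ring.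
  by rewrite ?P01 ?P02 ?P03 ?P04 ?P05 ?P12 ?P13 ?P14 ?P15 ?P23 ?P24 ?P25 ?P34 ?P35 ?P45 ?E01 ?E02 ?E04 ?E05 ?E12 ?E13 ?E15 ?E23 ?E24 ?E34 ?E35 ?E45; ring.
have fT135_4 : II * (b0135*b1235*b1345) * a4 = 0.
  transitivity ((b0125*b0135*b1345*b2345) * (- b0123*b1345*a2 + b0135*b1234*a1) + (- b0123*b0135*b1345*b2345) * (- b0125*b1345*a2 + b0145*b1235*a4) + (b0125*b0135*b1234*b1345) * (- b0135*b2345*a1 + b0345*b1235*a4) + (b0135*b0235*b1235*b1345*a4) * (b0124*b1345 - b0134*b1245 + b0145*b1234) + (- b0125*b0135*b1345*b1345*a4 + b0135*b0135*b1245*b1345*a4) * (b0123*b2345 - b0234*b1235 + b0235*b1234) + (- b0125*b0135*b1345*b2345*a4 + b0135*b0235*b1245*b1345*a4) * (- b0123*b1345 + b0134*b1235 - b0135*b1234) + (- b0135*b0135*b1345*b2345*a4 + b0135*b0235*b1345*b1345*a4) * (b0123*b1245 - b0124*b1235 + b0125*b1234) + (b0135*b1235*b1345*b2345*a4) * (b0123*b0145 - b0124*b0135 + b0125*b0134) + (b0135*b0135*b1235*b1345*a4) * (- b0124*b2345 + b0234*b1245 - b0245*b1234) + (- b0135*b1234*b1235*b1345*a4) * (b0125*b0345 - b0135*b0245 + b0145*b0235)); first by rewrite /II; ring.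
  by rewrite ?P01 ?P02 ?P03 ?P04 ?P05 ?P12 ?P13 ?P14 ?P15 ?P23 ?P24 ?P25 ?P34 ?P35 ?P45 ?E01 ?E02 ?E04 ?E05 ?E12 ?E13 ?E15 ?E23 ?E24 ?E34 ?E35 ?E45; ring.
have fT045_1 : II * (b0145*b0245*b0345) * a1 = 0.
  transitivity ((b0125*b0245*b0345*b1345) * (- b0124*b0345*a2 + b0145*b0234*a1) + (- b0124*b0245*b0345*b1345) * (- b0125*b0345*a2 - b0135*b0245*a3) + (b0124*b0135*b0245*b0345) * (- b0145*b2345*a1 - b0245*b1345*a3)); first by rewrite /II; ring.
  by rewrite ?P01 ?P02 ?P03 ?P04 ?P05 ?P12 ?P13 ?P14 ?P15 ?P23 ?P24 ?P25 ?P34 ?P35 ?P45 ?E01 ?E02 ?E04 ?E05 ?E12 ?E13 ?E15 ?E23 ?E24 ?E34 ?E35 ?E45; ring.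
have fT045_2 : II * (b0145*b0245*b0345) * a2 = 0.
  transitivity ((b0135*b0145*b0245*b2345) * (- b0124*b0345*a2 + b0145*b0234*a1) + (- b0145*b0234*b0245*b1345) * (- b0125*b0345*a2 - b0135*b0245*a3) + (b0135*b0145*b0234*b0245) * (- b0145*b2345*a1 - b0245*b1345*a3)); first by rewrite /II; ring.
  by rewrite ?P01 ?P02 ?P03 ?P04 ?P05 ?P12 ?P13 ?P14 ?P15 ?P23 ?P24 ?P25 ?P34 ?P35 ?P45 ?E01 ?E02 ?E04 ?E05 ?E12 ?E13 ?E15 ?E23 ?E24 ?E34 ?E35 ?E45; ring.
have fT045_3 : II * (b0145*b0245*b0345) * a3 = 0.
  transitivity ((- b0125*b0145*b0345*b2345) * (- b0124*b0345*a2 + b0145*b0234*a1) + (b0124*b0145*b0345*b2345) * (- b0125*b0345*a2 - b0135*b0245*a3) + (- b0125*b0145*b0234*b0345) * (- b0145*b2345*a1 - b0245*b1345*a3)); first by rewrite /II; ring.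
  by rewrite ?P01 ?P02 ?P03 ?P04 ?P05 ?P12 ?P13 ?P14 ?P15 ?P23 ?P24 ?P25 ?P34 ?P35 ?P45 ?E01 ?E02 ?E04 ?E05 ?E12 ?E13 ?E15 ?E23 ?E24 ?E34 ?E35 ?E45; ring.
have fT123_1 : II * (- b0123*b1234*b1235) * a1 = 0.
  transitivity ((- b0123*b0234*b1235*b1345) * (b0124*b1235*a3 + b0125*b1234*a1) + (b0123*b0124*b1235*b2345) * (- b0123*b1345*a2 + b0135*b1234*a1) + (- b0123*b0124*b1235*b1345) * (- b0123*b2345*a2 - b0234*b1235*a3)); first by rewrite /II; ring.
  by rewrite ?P01 ?P02 ?P03 ?P04 ?P05 ?P12 ?P13 ?P14 ?P15 ?P23 ?P24 ?P25 ?P34 ?P35 ?P45 ?E01 ?E02 ?E04 ?E05 ?E12 ?E13 ?E15 ?E23 ?E24 ?E34 ?E35 ?E45; ring.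
have fT123_2 : II * (- b0123*b1234*b1235) * a2 = 0.
  transitivity ((- b0135*b0234*b1234*b1235) * (b0124*b1235*a3 + b0125*b1234*a1) + (b0125*b0234*b1234*b1235) * (- b0123*b1345*a2 + b0135*b1234*a1) + (- b0124*b0135*b1234*b1235) * (- b0123*b2345*a2 - b0234*b1235*a3)); first by rewrite /II; ring.
  by rewrite ?P01 ?P02 ?P03 ?P04 ?P05 ?P12 ?P13 ?P14 ?P15 ?P23 ?P24 ?P25 ?P34 ?P35 ?P45 ?E01 ?E02 ?E04 ?E05 ?E12 ?E13 ?E15 ?E23 ?E24 ?E34 ?E35 ?E45; ring.
have fT123_3 : II * (- b0123*b1234*b1235) * a3 = 0.
  transitivity ((b0123*b0135*b1234*b2345) * (b0124*b1235*a3 + b0125*b1234*a1) + (- b0123*b0125*b1234*b2345) * (- b0123*b1345*a2 + b0135*b1234*a1) + (b0123*b0125*b1234*b1345) * (- b0123*b2345*a2 - b0234*b1235*a3)); first by rewrite /II; ring.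
  by rewrite ?P01 ?P02 ?P03 ?P04 ?P05 ?P12 ?P13 ?P14 ?P15 ?P23 ?P24 ?P25 ?P34 ?P35 ?P45 ?E01 ?E02 ?E04 ?E05 ?E12 ?E13 ?E15 ?E23 ?E24 ?E34 ?E35 ?E45; ring.
have g1 : a1 * II ^+ 3 = 0.
  transitivity (a1 * II * (b0123*b0145*b0245*b2345 - b0123*b0245*b0245*b1345 + 2*b0124*b0235*b0245*b1345) * (- b0123*b1345 + b0134*b1235 - b0135*b1234) + a1 * II * (b0123*b0245*b1345*b1345 - b0124*b0235*b1345*b1345 + 2*b0124*b0345*b1235*b1345 - b0125*b0234*b1345*b1345 + b0134*b0145*b1235*b2345 - b0134*b0245*b1235*b1345 - b0135*b0145*b1234*b2345 + b0135*b0245*b1234*b1345) * (- b0123*b0245 + b0124*b0235 - b0125*b0234) + (4*b0345*b1345*b2345) * (II * (b0123*b0124*b0125) * a1) + (b0123*b0125*b0145*b2345*b2345 - 2*b0123*b0125*b0245*b1345*b2345 + b0124*b0125*b0135*b2345*b2345 - 2*b0124*b0125*b0235*b1345*b2345) * (II * (b0134) * a1) + a1 * II * (- b0123*b0145*b2345*b2345 + 2*b0123*b0245*b1345*b2345 - b0124*b0135*b2345*b2345 + b0145*b0234*b1235*b2345 - b0145*b0235*b1234*b2345 - b0234*b0245*b1235*b1345 + b0235*b0245*b1234*b1345) * (b0123*b0145 - b0124*b0135 + b0125*b0134) + a1 * II * (b0123*b0145*b0145*b2345 - b0123*b0145*b0245*b1345 - 2*b0124*b0125*b0345*b1345 + 2*b0124*b0135*b0245*b1345)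 * (b0123*b2345 - b0234*b1235 + b0235*b1234) + a1 * II * (b0123*b0145*b0345*b2345 - b0123*b0245*b0345*b1345 + 2*b0124*b0235*b0345*b1345) * (b0123*b1245 - b0124*b1235 + b0125*b1234) + a1 * II * (- 2*b0124*b0125*b1345*b2345 + b0124*b0145*b1235*b2345 + b0124*b0245*b1235*b1345 - b0125*b0145*b1234*b2345 + b0125*b0245*b1234*b1345) * (b0123*b0345 - b0134*b0235 + b0135*b0234) + (- b0123*b0123*b0145*b0345*b2345 + b0123*b0123*b0245*b0345*b1345 - 2*b0123*b0124*b0235*b0345*b1345) * (II * (b1245) * a1) + (b0124*b0124*b0235*b1345*b1345) * (II * (b0235) * a1)); first by rewrite /II; ring.
  by rewrite fT012_1 fD0134_1 fD1245_1 fD0235_1 ?P01 ?P02 ?P03 ?P04 ?P05 ?P12 ?P13 ?P14 ?P15 ?P23 ?P24 ?P25 ?P34 ?P35 ?P45 ?E01 ?E02 ?E04 ?E05 ?E12 ?E13 ?E15 ?E23 ?E24 ?E34 ?E35 ?E45; ring.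
have g2 : a2 * II ^+ 3 = 0.
  transitivity (a2 * II * (b0123*b0145*b0245*b2345 - b0123*b0245*b0245*b1345 - 4*b0124*b0135*b0245*b2345 + 2*b0124*b0235*b0245*b1345) * (- b0123*b1345 + b0134*b1235 - b0135*b1234) + a2 * II * (b0123*b0245*b1345*b1345 + 4*b0124*b0135*b1345*b2345 - b0124*b0235*b1345*b1345 + 2*b0124*b0345*b1235*b1345 - b0125*b0234*b1345*b1345 + b0134*b0145*b1235*b2345 - b0134*b0245*b1235*b1345 + 3*b0135*b0145*b1234*b2345 + b0135*b0245*b1234*b1345) * (- b0123*b0245 + b0124*b0235 - b0125*b0234) + (- 4*b0234*b1234*b2345) * (II * (- b0125*b0135*b0145) * a2) + (b0123*b0125*b0145*b2345*b2345 - 2*b0123*b0125*b0245*b1345*b2345 + 4*b0123*b0135*b0245*b1245*b2345 + b0124*b0125*b0135*b2345*b2345 + 2*b0124*b0125*b0235*b1345*b2345 - 4*b0124*b0135*b0235*b1245*b2345) * (II * (b0134) * a2) + a2 * II * (- b0123*b0145*b2345*b2345 + 2*b0123*b0245*b1345*b2345 - b0124*b0135*b2345*b2345 + 4*b0135*b0245*b1234*b2345 + b0145*b0234*b1235*b2345 - b0145*b0235*b1234*b2345 - b0234*b0245*b1235*b1345 + b0235*b0245*b1234*b1345) * (b0123*b0145 - b0124*b0135 + b0125*b0134) + a2 * II * (b0123*b0145*b0345*b2345 - b0123*b0245*b0345*b1345 + 2*b0124*b0235*b0345*b1345 - 4*b0134*b0135*b0245*b2345) * (b0123*b1245 - b0124*b1235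 + b0125*b1234) + a2 * II * (- 4*b0124*b0135*b0235*b2345) * (b0124*b1345 - b0134*b1245 + b0145*b1234) + a2 * II * (b0123*b0145*b0145*b2345 - b0123*b0145*b0245*b1345 - 2*b0124*b0125*b0345*b1345 + 2*b0124*b0135*b0245*b1345) * (b0123*b2345 - b0234*b1235 + b0235*b1234) + a2 * II * (2*b0124*b0125*b1345*b2345 + b0124*b0145*b1235*b2345 + b0124*b0245*b1235*b1345 - b0125*b0145*b1234*b2345 + b0125*b0245*b1234*b1345) * (b0123*b0345 - b0134*b0235 + b0135*b0234) + (- b0123*b0123*b0145*b0345*b2345 + b0123*b0123*b0245*b0345*b1345 - 2*b0123*b0124*b0235*b0345*b1345) * (II * (b1245) * a2) + (b0124*b0124*b0235*b1345*b1345) * (II * (b0235) * a2)); first by rewrite /II; ring.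
  by rewrite fT015_2 fD0134_2 fD1245_2 fD0235_2 ?P01 ?P02 ?P03 ?P04 ?P05 ?P12 ?P13 ?P14 ?P15 ?P23 ?P24 ?P25 ?P34 ?P35 ?P45 ?E01 ?E02 ?E04 ?E05 ?E12 ?E13 ?E15 ?E23 ?E24 ?E34 ?E35 ?E45; ring.
have g3 : a3 * II ^+ 3 = 0.
  transitivity (a3 * II * (b0123*b0145*b0245*b2345 - b0123*b0245*b0245*b1345 - 4*b0124*b0135*b0245*b2345 + 2*b0124*b0235*b0245*b1345) * (- b0123*b1345 + b0134*b1235 - b0135*b1234) + a3 * II * (b0123*b0245*b1345*b1345 + 4*b0124*b0135*b1345*b2345 - b0124*b0235*b1345*b1345 + 2*b0124*b0345*b1235*b1345 - b0125*b0234*b1345*b1345 + b0134*b0145*b1235*b2345 - b0134*b0245*b1235*b1345 + 3*b0135*b0145*b1234*b2345 + b0135*b0245*b1234*b1345) * (- b0123*b0245 + b0124*b0235 - b0125*b0234) + (- 4*b0234*b1234*b2345) * (II * (- b0125*b0135*b0145) * a3) + (b0123*b0125*b0145*b2345*b2345 - 2*b0123*b0125*b0245*b1345*b2345 + 4*b0123*b0135*b0245*b1245*b2345 + b0124*b0125*b0135*b2345*b2345 + 2*b0124*b0125*b0235*b1345*b2345 - 4*b0124*b0135*b0235*b1245*b2345) * (II * (b0134) * a3) + a3 * II * (- b0123*b0145*b2345*b2345 + 2*b0123*b0245*b1345*b2345 - b0124*b0135*b2345*b2345 + 4*b0135*b0245*b1234*b2345 + b0145*b0234*b1235*b2345 -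 b0145*b0235*b1234*b2345 - b0234*b0245*b1235*b1345 + b0235*b0245*b1234*b1345) * (b0123*b0145 - b0124*b0135 + b0125*b0134) + a3 * II * (b0123*b0145*b0345*b2345 - b0123*b0245*b0345*b1345 + 2*b0124*b0235*b0345*b1345 - 4*b0134*b0135*b0245*b2345) * (b0123*b1245 - b0124*b1235 + b0125*b1234) + a3 * II * (- 4*b0124*b0135*b0235*b2345) * (b0124*b1345 - b0134*b1245 + b0145*b1234) + a3 * II * (b0123*b0145*b0145*b2345 - b0123*b0145*b0245*b1345 - 2*b0124*b0125*b0345*b1345 + 2*b0124*b0135*b0245*b1345) * (b0123*b2345 - b0234*b1235 + b0235*b1234) + a3 * II * (2*b0124*b0125*b1345*b2345 + b0124*b0145*b1235*b2345 + b0124*b0245*b1235*b1345 - b0125*b0145*b1234*b2345 + b0125*b0245*b1234*b1345) * (b0123*b0345 - b0134*b0235 + b0135*b0234) + (- b0123*b0123*b0145*b0345*b2345 + b0123*b0123*b0245*b0345*b1345 - 2*b0123*b0124*b0235*b0345*b1345) * (II * (b1245) * a3) + (b0124*b0124*b0235*b1345*b1345) * (II * (b0235) * a3)); first by rewrite /II; ring.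
  by rewrite fT015_3 fD0134_3 fD1245_3 fD0235_3 ?P01 ?P02 ?P03 ?P04 ?P05 ?P12 ?P13 ?P14 ?P15 ?P23 ?P24 ?P25 ?P34 ?P35 ?P45 ?E01 ?E02 ?E04 ?E05 ?E12 ?E13 ?E15 ?E23 ?E24 ?E34 ?E35 ?E45; ring.
have g4 : a4 * II ^+ 3 = 0.
  transitivity (a4 * II * (b0123*b0145*b0245*b2345 - b0123*b0245*b0245*b1345 - 4*b0124*b0135*b0245*b2345 + 2*b0124*b0235*b0245*b1345) * (- b0123*b1345 + b0134*b1235 - b0135*b1234) + a4 * II * (b0123*b0245*b1345*b1345 + 4*b0124*b0135*b1345*b2345 - b0124*b0235*b1345*b1345 + 2*b0124*b0345*b1235*b1345 - b0125*b0234*b1345*b1345 + b0134*b0145*b1235*b2345 - b0134*b0245*b1235*b1345 + 3*b0135*b0145*b1234*b2345 + b0135*b0245*b1234*b1345) * (- b0123*b0245 + b0124*b0235 - b0125*b0234) + (- 4*b0234*b1234*b2345) * (II * (- b0125*b0135*b0145) * a4) + (b0123*b0125*b0145*b2345*b2345 - 2*b0123*b0125*b0245*b1345*b2345 + 4*b0123*b0135*b0245*b1245*b2345 + b0124*b0125*b0135*b2345*b2345 + 2*b0124*b0125*b0235*b1345*b2345 - 4*b0124*b0135*b0235*b1245*b2345) * (II * (b0134) * a4) + a4 * II * (- b0123*b0145*b2345*b2345 + 2*b0123*b0245*b1345*b2345 - b0124*b0135*b2345*b2345 + 4*b0135*b0245*b1234*b2345 + b0145*b0234*b1235*b2345 -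 b0145*b0235*b1234*b2345 - b0234*b0245*b1235*b1345 + b0235*b0245*b1234*b1345) * (b0123*b0145 - b0124*b0135 + b0125*b0134) + a4 * II * (b0123*b0145*b0345*b2345 - b0123*b0245*b0345*b1345 + 2*b0124*b0235*b0345*b1345 - 4*b0134*b0135*b0245*b2345) * (b0123*b1245 - b0124*b1235 + b0125*b1234) + a4 * II * (- 4*b0124*b0135*b0235*b2345) * (b0124*b1345 - b0134*b1245 + b0145*b1234) + a4 * II * (b0123*b0145*b0145*b2345 - b0123*b0145*b0245*b1345 - 2*b0124*b0125*b0345*b1345 + 2*b0124*b0135*b0245*b1345) * (b0123*b2345 - b0234*b1235 + b0235*b1234) + a4 * II * (2*b0124*b0125*b1345*b2345 + b0124*b0145*b1235*b2345 + b0124*b0245*b1235*b1345 - b0125*b0145*b1234*b2345 + b0125*b0245*b1234*b1345) * (b0123*b0345 - b0134*b0235 + b0135*b0234) + (- b0123*b0123*b0145*b0345*b2345 + b0123*b0123*b0245*b0345*b1345 - 2*b0123*b0124*b0235*b0345*b1345) * (II * (b1245) * a4) + (b0124*b0124*b0235*b1345*b1345) * (II * (b0235) * a4)); first by rewrite /II; ring.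
  by rewrite fT015_4 fD0134_4 fD1245_4 fD0235_4 ?P01 ?P02 ?P03 ?P04 ?P05 ?P12 ?P13 ?P14 ?P15 ?P23 ?P24 ?P25 ?P34 ?P35 ?P45 ?E01 ?E02 ?E04 ?E05 ?E12 ?E13 ?E15 ?E23 ?E24 ?E34 ?E35 ?E45; ring.
have nz : II ^+ 3 != 0 by rewrite expf_neq0.
by split; [move: g1|move: g2|move: g3|move: g4]; move/eqP; rewrite mulf_eq0 (negbTE nz) orbF => /eqP.
Qed.
Section S3.
Variable F : fieldType.
Variable V : nat -> 'cV[F]_4.

Lemma brv_p1 (u v w x : 'cV[F]_4) : brv u v w x = - brv x u v w. Proof. rewrite !brvE; ring. Qed.
Lemma brv_p2 (u v w x : 'cV[F]_4) : brv u v w x = brv u x v w. Proof. rewrite !brvE; ring. Qed.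
Lemma brv_p3 (u v w x : 'cV[F]_4) : brv u v w x = - brv u v x w. Proof. rewrite !brvE; ring. Qed.
Lemma indep (a : 'rV[F]_4) : a *m Qmat V = 0 ->
  (brv (V 0) (V 1) (V 2) (V 5) * brv (V 0) (V 2) (V 3) (V 4) * brv (V 1) (V 3) (V 4) (V 5) - brv (V 0) (V 1) (V 2) (V 4) * brv (V 2) (V 3) (V 4) (V 5) * brv (V 0) (V 1) (V 3) (V 5)) != 0 -> a = 0.
Proof.
move=> haQ hII.
have H : forall x, a 0 (inord 0) * Qs V 0 x + a 0 (inord 1) * Qs V 1 x + a 0 (inord 2) * Qs V 2 x + a 0 (inord 3) * Qs V 3 x = 0.
  move=> x; rewrite -quadform_mul4 haQ /quadform; apply: big1 => k _; by rewrite mxE mul0r.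
pose b0123 := brv (V 0) (V 1) (V 2) (V 3).
pose b0124 := brv (V 0) (V 1) (V 2) (V 4).
pose b0125 := brv (V 0) (V 1) (V 2) (V 5).
pose b0134 := brv (V 0) (V 1) (V 3) (V 4).
pose b0135 := brv (V 0) (V 1) (V 3) (V 5).
pose b0145 := brv (V 0) (V 1) (V 4) (V 5).
pose b0234 := brv (V 0) (V 2) (V 3) (V 4).
pose b0235 := brv (V 0) (V 2) (V 3) (V 5).
pose b0245 := brv (V 0) (V 2) (V 4) (V 5).
pose b0345 := brv (V 0) (V 3) (V 4) (V 5).
pose b1234 := brv (V 1) (V 2) (V 3) (V 4).
pose b1235 := brv (V 1) (V 2) (V 3) (V 5).
pose b1245 := brv (V 1) (V 2) (V 4) (V 5).
pose b1345 := brv (V 1) (V 3) (V 4) (V 5).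
pose b2345 := brv (V 2) (V 3) (V 4) (V 5).
pose a1 := a 0 (inord 0).
pose a2 := a 0 (inord 1).
pose a3 := a 0 (inord 2).
pose a4 := a 0 (inord 3).
have P01 : (b0123*b0145 - b0124*b0135 + b0125*b0134) = 0 by rewrite /b0123 /b0124 /b0125 /b0134 /b0135 /b0145 /b0234 /b0235 /b0245 /b0345 /b1234 /b1235 /b1245 /b1345 /b2345 !brvE; ring.
have P02 : (- b0123*b0245 + b0124*b0235 - b0125*b0234) = 0 by rewrite /b0123 /b0124 /b0125 /b0134 /b0135 /b0145 /b0234 /b0235 /b0245 /b0345 /b1234 /b1235 /b1245 /b1345 /b2345 !brvE; ring.
have P03 : (b0123*b0345 - b0134*b0235 + b0135*b0234) = 0 by rewrite /b0123 /b0124 /b0125 /b0134 /b0135 /b0145 /b0234 /b0235 /b0245 /b0345 /b1234 /b1235 /b1245 /b1345 /b2345 !brvE; ring.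
have P04 : (- b0124*b0345 + b0134*b0245 - b0145*b0234) = 0 by rewrite /b0123 /b0124 /b0125 /b0134 /b0135 /b0145 /b0234 /b0235 /b0245 /b0345 /b1234 /b1235 /b1245 /b1345 /b2345 !brvE; ring.
have P05 : (b0125*b0345 - b0135*b0245 + b0145*b0235) = 0 by rewrite /b0123 /b0124 /b0125 /b0134 /b0135 /b0145 /b0234 /b0235 /b0245 /b0345 /b1234 /b1235 /b1245 /b1345 /b2345 !brvE; ring.
have P12 : (b0123*b1245 - b0124*b1235 + b0125*b1234) = 0 by rewrite /b0123 /b0124 /b0125 /b0134 /b0135 /b0145 /b0234 /b0235 /b0245 /b0345 /b1234 /b1235 /b1245 /b1345 /b2345 !brvE; ring.
have P13 : (- b0123*b1345 + b0134*b1235 - b0135*b1234) = 0 by rewrite /b0123 /b0124 /b0125 /b0134 /b0135 /b0145 /b0234 /b0235 /b0245 /b0345 /b1234 /b1235 /b1245 /b1345 /b2345 !brvE; ring.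
have P14 : (b0124*b1345 - b0134*b1245 + b0145*b1234) = 0 by rewrite /b0123 /b0124 /b0125 /b0134 /b0135 /b0145 /b0234 /b0235 /b0245 /b0345 /b1234 /b1235 /b1245 /b1345 /b2345 !brvE; ring.
have P15 : (- b0125*b1345 + b0135*b1245 - b0145*b1235) = 0 by rewrite /b0123 /b0124 /b0125 /b0134 /b0135 /b0145 /b0234 /b0235 /b0245 /b0345 /b1234 /b1235 /b1245 /b1345 /b2345 !brvE; ring.
have P23 : (b0123*b2345 - b0234*b1235 + b0235*b1234) = 0 by rewrite /b0123 /b0124 /b0125 /b0134 /b0135 /b0145 /b0234 /b0235 /b0245 /b0345 /b1234 /b1235 /b1245 /b1345 /b2345 !brvE; ring.
have P24 : (- b0124*b2345 + b0234*b1245 - b0245*b1234) = 0 by rewrite /b0123 /b0124 /b0125 /b0134 /b0135 /b0145 /b0234 /b0235 /b0245 /b0345 /b1234 /b1235 /b1245 /b1345 /b2345 !brvE; ring.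
have P25 : (b0125*b2345 - b0235*b1245 + b0245*b1235) = 0 by rewrite /b0123 /b0124 /b0125 /b0134 /b0135 /b0145 /b0234 /b0235 /b0245 /b0345 /b1234 /b1235 /b1245 /b1345 /b2345 !brvE; ring.
have P34 : (b0134*b2345 - b0234*b1345 + b0345*b1234) = 0 by rewrite /b0123 /b0124 /b0125 /b0134 /b0135 /b0145 /b0234 /b0235 /b0245 /b0345 /b1234 /b1235 /b1245 /b1345 /b2345 !brvE; ring.
have P35 : (- b0135*b2345 + b0235*b1345 - b0345*b1235) = 0 by rewrite /b0123 /b0124 /b0125 /b0134 /b0135 /b0145 /b0234 /b0235 /b0245 /b0345 /b1234 /b1235 /b1245 /b1345 /b2345 !brvE; ring.
have P45 : (b0145*b2345 - b0245*b1345 + b0345*b1245) = 0 by rewrite /b0123 /b0124 /b0125 /b0134 /b0135 /b0145 /b0234 /b0235 /b0245 /b0345 /b1234 /b1235 /b1245 /b1345 /b2345 !brvE; ring.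
have E01 : (- b0123*b0145*a4 - b0124*b0135*a3) = 0.
  have h := H (V 0 + V 1); rewrite /Qs /= !brv_addr ?brv_0 ?brv_1 ?brv_2 in h.
  rewrite ?(brv_p1 (V 2) (V 3) (V 4) (V 0)) ?(brv_p1 (V 2) (V 3) (V 4) (V 1)) ?(brv_p1 (V 3) (V 4) (V 5) (V 0)) ?(brv_p1 (V 3) (V 4) (V 5) (V 1)) ?(brv_p2 (V 0) (V 2) (V 4) (V 1)) ?(brv_p1 (V 1) (V 3) (V 5) (V 0)) ?(brv_p2 (V 0) (V 4) (V 5) (V 1)) ?(brv_p1 (V 1) (V 2) (V 3) (V 0)) in h.
  apply: etrans h; rewrite /b0123 /b0124 /b0125 /b0134 /b0135 /b0145 /b0234 /b0235 /b0245 /b0345 /b1234 /b1235 /b1245 /b1345 /b2345 /a1 /a2 /a3 /a4; ring.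
have E02 : (- b0123*b0245*a4 + b0125*b0234*a1) = 0.
  have h := H (V 0 + V 2); rewrite /Qs /= !brv_addr ?brv_0 ?brv_1 ?brv_2 in h.
  rewrite ?(brv_p3 (V 0) (V 1) (V 5) (V 2)) ?(brv_p1 (V 2) (V 3) (V 4) (V 0)) ?(brv_p1 (V 3) (V 4) (V 5) (V 0)) ?(brv_p1 (V 3) (V 4) (V 5) (V 2)) ?(brv_p1 (V 1) (V 3) (V 5) (V 0)) ?(brv_p2 (V 1) (V 3) (V 5) (V 2)) ?(brv_p2 (V 0) (V 4) (V 5) (V 2)) ?(brv_p1 (V 1) (V 2) (V 3) (V 0)) in h.
  apply: etrans h; rewrite /b0123 /b0124 /b0125 /b0134 /b0135 /b0145 /b0234 /b0235 /b0245 /b0345 /b1234 /b1235 /b1245 /b1345 /b2345 /a1 /a2 /a3 /a4; ring.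
have E04 : (- b0124*b0345*a2 + b0145*b0234*a1) = 0.
  have h := H (V 0 + V 4); rewrite /Qs /= !brv_addr ?brv_0 ?brv_1 ?brv_2 in h.
  rewrite ?(brv_p3 (V 0) (V 1) (V 5) (V 4)) ?(brv_p1 (V 2) (V 3) (V 4) (V 0)) ?(brv_p1 (V 3) (V 4) (V 5) (V 0)) ?(brv_p1 (V 1) (V 3) (V 5) (V 0)) ?(brv_p3 (V 1) (V 3) (V 5) (V 4)) ?(brv_p1 (V 1) (V 2) (V 3) (V 0)) in h.
  apply: etrans h; rewrite /b0123 /b0124 /b0125 /b0134 /b0135 /b0145 /b0234 /b0235 /b0245 /b0345 /b1234 /b1235 /b1245 /b1345 /b2345 /a1 /a2 /a3 /a4; ring.
have E05 : (- b0125*b0345*a2 - b0135*b0245*a3) = 0.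
  have h := H (V 0 + V 5); rewrite /Qs /= !brv_addr ?brv_0 ?brv_1 ?brv_2 in h.
  rewrite ?(brv_p1 (V 2) (V 3) (V 4) (V 0)) ?(brv_p1 (V 3) (V 4) (V 5) (V 0)) ?(brv_p1 (V 1) (V 3) (V 5) (V 0)) ?(brv_p1 (V 1) (V 2) (V 3) (V 0)) in h.
  apply: etrans h; rewrite /b0123 /b0124 /b0125 /b0134 /b0135 /b0145 /b0234 /b0235 /b0245 /b0345 /b1234 /b1235 /b1245 /b1345 /b2345 /a1 /a2 /a3 /a4; ring.
have E12 : (b0124*b1235*a3 + b0125*b1234*a1) = 0.
  have h := H (V 1 + V 2); rewrite /Qs /= !brv_addr ?brv_0 ?brv_1 ?brv_2 in h.
  rewrite ?(brv_p3 (V 0) (V 1) (V 5) (V 2)) ?(brv_p1 (V 2) (V 3) (V 4) (V 1)) ?(brv_p1 (V 3) (V 4) (V 5) (V 1)) ?(brv_p1 (V 3) (V 4) (V 5) (V 2)) ?(brv_p2 (V 0) (V 2) (V 4) (V 1)) ?(brv_p2 (V 1) (V 3) (V 5) (V 2)) ?(brv_p2 (V 0) (V 4) (V 5) (V 1)) ?(brv_p2 (V 0) (V 4) (V 5) (V 2)) in h.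
  apply: etrans h; rewrite /b0123 /b0124 /b0125 /b0134 /b0135 /b0145 /b0234 /b0235 /b0245 /b0345 /b1234 /b1235 /b1245 /b1345 /b2345 /a1 /a2 /a3 /a4; ring.
have E13 : (- b0123*b1345*a2 + b0135*b1234*a1) = 0.
  have h := H (V 1 + V 3); rewrite /Qs /= !brv_addr ?brv_0 ?brv_1 ?brv_2 in h.
  rewrite ?(brv_p3 (V 0) (V 1) (V 5) (V 3)) ?(brv_p1 (V 2) (V 3) (V 4) (V 1)) ?(brv_p1 (V 3) (V 4) (V 5) (V 1)) ?(brv_p2 (V 0) (V 2) (V 4) (V 1)) ?(brv_p3 (V 0) (V 2) (V 4) (V 3)) ?(brv_p2 (V 0) (V 4) (V 5) (V 1)) ?(brv_p2 (V 0) (V 4) (V 5) (V 3)) in h.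
  apply: etrans h; rewrite /b0123 /b0124 /b0125 /b0134 /b0135 /b0145 /b0234 /b0235 /b0245 /b0345 /b1234 /b1235 /b1245 /b1345 /b2345 /a1 /a2 /a3 /a4; ring.
have E15 : (- b0125*b1345*a2 + b0145*b1235*a4) = 0.
  have h := H (V 1 + V 5); rewrite /Qs /= !brv_addr ?brv_0 ?brv_1 ?brv_2 in h.
  rewrite ?(brv_p1 (V 2) (V 3) (V 4) (V 1)) ?(brv_p1 (V 3) (V 4) (V 5) (V 1)) ?(brv_p2 (V 0) (V 2) (V 4) (V 1)) ?(brv_p2 (V 0) (V 4) (V 5) (V 1)) in h.
  apply: etrans h; rewrite /b0123 /b0124 /b0125 /b0134 /b0135 /b0145 /b0234 /b0235 /b0245 /b0345 /b1234 /b1235 /b1245 /b1345 /b2345 /a1 /a2 /a3 /a4; ring.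
have E23 : (- b0123*b2345*a2 - b0234*b1235*a3) = 0.
  have h := H (V 2 + V 3); rewrite /Qs /= !brv_addr ?brv_0 ?brv_1 ?brv_2 in h.
  rewrite ?(brv_p3 (V 0) (V 1) (V 5) (V 2)) ?(brv_p3 (V 0) (V 1) (V 5) (V 3)) ?(brv_p1 (V 3) (V 4) (V 5) (V 2)) ?(brv_p3 (V 0) (V 2) (V 4) (V 3)) ?(brv_p2 (V 1) (V 3) (V 5) (V 2)) ?(brv_p2 (V 0) (V 4) (V 5) (V 2)) ?(brv_p2 (V 0) (V 4) (V 5) (V 3)) in h.
  apply: etrans h; rewrite /b0123 /b0124 /b0125 /b0134 /b0135 /b0145 /b0234 /b0235 /b0245 /b0345 /b1234 /b1235 /b1245 /b1345 /b2345 /a1 /a2 /a3 /a4; ring.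
have E24 : (- b0124*b2345*a2 + b0245*b1234*a4) = 0.
  have h := H (V 2 + V 4); rewrite /Qs /= !brv_addr ?brv_0 ?brv_1 ?brv_2 in h.
  rewrite ?(brv_p3 (V 0) (V 1) (V 5) (V 2)) ?(brv_p3 (V 0) (V 1) (V 5) (V 4)) ?(brv_p1 (V 3) (V 4) (V 5) (V 2)) ?(brv_p2 (V 1) (V 3) (V 5) (V 2)) ?(brv_p3 (V 1) (V 3) (V 5) (V 4)) ?(brv_p2 (V 0) (V 4) (V 5) (V 2)) in h.
  apply: etrans h; rewrite /b0123 /b0124 /b0125 /b0134 /b0135 /b0145 /b0234 /b0235 /b0245 /b0345 /b1234 /b1235 /b1245 /b1345 /b2345 /a1 /a2 /a3 /a4; ring.
have E34 : (b0234*b1345*a3 + b0345*b1234*a4) = 0.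
  have h := H (V 3 + V 4); rewrite /Qs /= !brv_addr ?brv_0 ?brv_1 ?brv_2 in h.
  rewrite ?(brv_p3 (V 0) (V 1) (V 5) (V 3)) ?(brv_p3 (V 0) (V 1) (V 5) (V 4)) ?(brv_p3 (V 0) (V 2) (V 4) (V 3)) ?(brv_p3 (V 1) (V 3) (V 5) (V 4)) ?(brv_p2 (V 0) (V 4) (V 5) (V 3)) in h.
  apply: etrans h; rewrite /b0123 /b0124 /b0125 /b0134 /b0135 /b0145 /b0234 /b0235 /b0245 /b0345 /b1234 /b1235 /b1245 /b1345 /b2345 /a1 /a2 /a3 /a4; ring.
have E35 : (- b0135*b2345*a1 + b0345*b1235*a4) = 0.
  have h := H (V 3 + V 5); rewrite /Qs /= !brv_addr ?brv_0 ?brv_1 ?brv_2 in h.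
  rewrite ?(brv_p3 (V 0) (V 1) (V 5) (V 3)) ?(brv_p3 (V 0) (V 2) (V 4) (V 3)) ?(brv_p2 (V 0) (V 4) (V 5) (V 3)) in h.
  apply: etrans h; rewrite /b0123 /b0124 /b0125 /b0134 /b0135 /b0145 /b0234 /b0235 /b0245 /b0345 /b1234 /b1235 /b1245 /b1345 /b2345 /a1 /a2 /a3 /a4; ring.
have E45 : (- b0145*b2345*a1 - b0245*b1345*a3) = 0.
  have h := H (V 4 + V 5); rewrite /Qs /= !brv_addr ?brv_0 ?brv_1 ?brv_2 in h.
  rewrite ?(brv_p3 (V 0) (V 1) (V 5) (V 4)) ?(brv_p3 (V 1) (V 3) (V 5) (V 4)) in h.
  apply: etrans h; rewrite /b0123 /b0124 /b0125 /b0134 /b0135 /b0145 /b0234 /b0235 /b0245 /b0345 /b1234 /b1235 /b1245 /b1345 /b2345 /a1 /a2 /a3 /a4; ring.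
have [h1 h2 h3 h4] := core P01 P02 P03 P04 P05 P12 P13 P14 P15 P23 P24 P25 P34 P35 P45 E01 E02 E04 E05 E12 E13 E15 E23 E24 E34 E35 E45 hII.
apply/rowP => i; rewrite mxE -(inord_val i).
by case: i => -[|[|[|[|n]]]] //= _.
Qed.
End S3.

Unset Implicit Arguments.

Theorem mainTheorem6 (R : realType) (p : 'I_10 -> 'cV[R[i]]_4) :
  (forall k, p k != 0) ->
  \rank (kermx (evalmx 6 p)) = 4%N ->
  br p 0 1 2 5 * br p 0 2 3 4 * br p 1 3 4 5
    - br p 0 1 2 4 * br p 2 3 4 5 * br p 0 1 3 5 != 0 ->
  ((exists c : 'rV[R[i]]_(nmon2), c != 0 /\ forall k, quadform c (p k) = 0)
   <-> \det (Mmx p) = 0).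
Proof.
move=> _ hrk hII.
pose V := pt p.
have hQ : Qmat V *m evalmx 6 p = 0.
  apply/matrixP => s i; rewrite !mxE.
  under eq_bigr => k _ do rewrite !mxE.
  rewrite -[LHS]/(quadform (Qrow V s) (V i)) quadform_Qrow Qs_vanish //.
have rfQ : row_free (Qmat V).
  by apply/inj_row_free => a ha; exact: (indep ha hII).
have sQK : (Qmat V <= kermx (evalmx 6 p))%MS by apply/sub_kermxP.
have sKQ : (kermx (evalmx 6 p) <= Qmat V)%MS.
  have [_ e] := mxrank_leqif_sup sQK.
  by rewrite -e hrk (eqP rfQ).
split.
  case=> c [c0 hc].
  have cK : (c <= kermx (evalmx 6 p))%MS.
    apply/sub_kermxP; apply/rowP => i; rewrite !mxE.
    under eq_bigr => k _ do rewrite !mxE.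
    exact: (hc (inord i)).
  have /submxP[D hD] := submx_trans cK sKQ.
  have D0 : D != 0 by apply: contraNneq c0 => D0; rewrite hD D0 mul0mx.
  apply/eqP; rewrite -det_tr; apply/det0P; exists D => //.
  apply/rowP => r; rewrite !mxE.
  have := hc (inord (r + 6)); rewrite hD quadform_mul => h.
  apply: etrans _ h.
  by apply: eq_bigr => s _; rewrite !mxE.
move=> hdet.
have : \det (Mmx p)^T == 0 by rewrite det_tr hdet.
case/det0P => D D0 hD.
exists (D *m Qmat V); split; first by rewrite mulmx_free_eq0.
move=> k; rewrite quadform_mul.
case: (ltnP k 6) => hk.
  apply: big1 => s _.
  have -> : p k = V k by rewrite /V /pt inord_val.
  by rewrite Qs_vanish // mulr0.
have hr : (k - 6 < 4)%N by have := ltn_ord k; lia.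
have ek : p k = V (Ordinal hr + 6)%N by rewrite /V /pt /= subnK // inord_val.
move/rowP/(_ (Ordinal hr)): hD; rewrite !mxE => h.
apply: etrans _ h.
by apply: eq_bigr => s _; rewrite ek !mxE.
Qed.
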